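(* Assume the setting and hypotheses of the previous statement (the orthogonality conditions on $\hat f_v,\hat g_w$ for $x\ge1$), together with the cone setting of the context, and assume moreover that $\Phi_{v,w}(e^{v,w}_0)\in C_{v,w}$ and $\hat\Phi^*_{v,w}(e^{v,w}_0)\in C^*_{v,w}$ for all $(v,w)\in E$, with $\langle \Phi_{v,w}(e^{v,w}_0),u^*_{v,w}\rangle>0$ and $\langle u_{v,w},\hat\Phi^*_{v,w}(e^{v,w}_0)\rangle>0$. Write $\Phi_{v,w}(e^{v,w}_0)=c_{v,w}m_{v\to w}$ and $\hat\Phi^*_{v,w}(e^{v,w}_0)=\hat c_{v,w}m_{w\to v}$ with $c_{v,w},\hat c_{v,w}>0$, $m_{v\to w}\in C_{v,w}$, $m_{w\to v}\in C^*_{v,w}$, $\langle m_{v\to w},u^*_{v,w}\rangle=1$, $\langle u_{v,w},m_{w\to v}\rangle=1$. Then: (i) $c_{v,w}\hat c_{v,w}\langle m_{v\to w},m_{w\to v}\rangle_{\mathcal{V}_{v,w}}=1$ for every edge; (ii) for every $(v,w)\in E$, $$\Big\langle f_v,\bigotimes_{w'\in\partial v\setminus\{w\}}m_{w'\to v}\Big\rangle_{\mathcal{V}_{\partial v\setminus w}}=\frac{\alpha_v c_{v,w}}{\prod_{w'\in\partial v\setminus\{w\}}\hat c_{v,w'}}\,m_{v\to w},\qquad \Big\langle\bigotimes_{v'\in\partial w\setminus\{v\}}m_{v'\to w},g_w\Big\rangle_{\mathcal{V}_{\partial w\setminus v}}=\frac{\hat\alpha_w\hat c_{v,w}}{\prod_{v'\in\partial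 w\setminus\{v\}}c_{v',w}}\,m_{w\to v},$$ so that (whenever $\alpha_v,\hat\alpha_w>0$) the messages $(m_{v\to w},m_{w\to v})_{(v,w)\in E}$ form a fixed point of belief propagation; (iii) the term of the all-zero assignment in the expansion of $\langle\bigotimes_v\hat f_v,\bigotimes_w\hat g_w\rangle_{\mathcal V}$ with respect to the bases $(e^{v,w}_x)$, namely $\prod_{v\in V}\alpha_v\prod_{w\in W}\hat\alpha_w$, equals $$\prod_{v\in V}\Big\langle f_v,\bigotimes_{w\in\partial v}m_{w\to v}\Big\rangle_{\mathcal{V}_{\partial v}}\prod_{w\in W}\Big\langle\bigotimes_{v\in\partial w}m_{v\to w},g_w\Big\rangle_{\mathcal{V}_{\partial w}}\prod_{(v,w)\in E}\frac{1}{\langle m_{v\to w},m_{w\to v}\rangle_{\mathcal{V}_{v,w}}}.$$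
   Context: Bipartite graph $(V,W,E\subseteq V\times W)$, $\partial v=\{w:(v,w)\in E\}$, $\partial w=\{v:(v,w)\in E\}$. For each edge, $\mathcal{V}_{v,w}$ is a real inner product space of dimension $q_{v,w}$ with orthonormal basis $(e^{v,w}_x)_{x=0,\dots,q_{v,w}-1}$; tensor products carry the product inner product. $\mathcal{V}_{\partial v}=\bigotimes_{w\in\partial v}\mathcal{V}_{v,w}$, $\mathcal{V}_{\partial w}=\bigotimes_{v\in\partial w}\mathcal{V}_{v,w}$, $\mathcal{V}_{\partial v\setminus w}$, $\mathcal{V}_{\partial w\setminus v}$ the tensor products over the neighbours other than $w$ (resp. $v$). $f_v\in\mathcal{V}_{\partial v}$, $g_w\in\mathcal{V}_{\partial w}$. $\Phi_{v,w}$ invertible on $\mathcal{V}_{v,w}$, $\hat\Phi_{v,w}=\Phi_{v,w}^{-1}$, $A^*$ is the adjoint with respect to the inner product; $\hat f_v=(\bigotimes_{w\in\partial v}\hat\Phi_{v,w})(f_v)$, $\hat g_w=(\bigotimes_{v\in\partial w}\Phi^*_{v,w})(g_w)$; $\alpha_v=\langle\hat f_v,\bigotimes_{w\in\partial v}e^{v,w}_0\rangle$, $\hat\alpha_w=\langle\bigotimes_{v\in\partial w}e^{v,w}_0,\hat g_w\rangle$. The hypotheses of the previous statement are: $\langle\hat f_v,e^{v,w}_x\otimes\bigotimes_{w'\in\partial v\setminus\{w\}}e^{v,w'}_0\rangle=0$ and $\langle e^{v,w}_x\otimes\bigotimes_{v'\in\partial w\setminus\{v\}}e^{v',w}_0,\hat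 g_w\rangle=0$ for all edges and $x\in\{1,\dots,q_{v,w}-1\}$. Partial inner product: for $f\in\mathcal V\otimes\mathcal W$, $g\in\mathcal V$, $\langle f,g\rangle_{\mathcal V}\in\mathcal W$ is determined by $\langle\langle f,g\rangle_{\mathcal V},h\rangle=\langle f,g\otimes h\rangle$ for all $h\in\mathcal W$. Cones: $C_{v,w}\subseteq\mathcal{V}_{v,w}$ closed convex cones, $C^*$ the dual cone $\{f:\langle f,g\rangle\ge0\ \forall g\in C\}$; $u_{v,w}$ and $u^*_{v,w}$ are fixed vectors in the interiors of $C_{v,w}$ and $C^*_{v,w}$. A belief propagation fixed point is a family $m_{v\to w}\in C_{v,w}$, $m_{w\to v}\in C^*_{v,w}$ with $\langle m_{v\to w},u^*_{v,w}\rangle=1=\langle u_{v,w},m_{w\to v}\rangle$ such that $m_{v\to w}$ is a strictly positive multiple of $\langle f_v,\bigotimes_{w'\in\partial v\setminus\{w\}}m_{w'\to v}\rangle$ and $m_{w\to v}$ is a strictly positive multiple of $\langle\bigotimes_{v'\in\partial w\setminus\{v\}}m_{v'\to w},g_w\rangle$. *)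

(* Defs.v *)
From HB Require Import structures.
From mathcomp Require Import all_boot all_order all_algebra.
Set Implicit Arguments.
Unset Strict Implicit.
Unset Printing Implicit Defensive.
Import Order.TTheory GRing.Theory Num.Theory.
Local Open Scope ring_scope.

(* For an edge (v,w) the space V_{v,w} is represented in the coordinates of its
   orthonormal basis (e_x)_{x < q_{v,w}}, i.e. as 'cV[R]_(q_{v,w}) with the standard
   inner product; we write q_{v,w} = (d v w).+1 (q_{v,w} >= 1 since e_0 exists). *)

Notation nbV E v := {w | (v, w) \in E}.
Notation nbW E w := {v | (v, w) \in E}.

(* basis configurations of V_{dv} = (x) _{w in dv} V_{v,w}, and of V_{dw} *)
Notation cfgV E d v := {dffun forall w : nbV E v, 'I_((d v (val w)).+1)}.
Notation cfgW E d w := {dffun forall v : nbW E w, 'I_((d (val v) w).+1)}.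

Definition dot (R : ringType) (n : nat) (a b : 'cV[R]_n) : R :=
  \sum_(i < n) a i 0 * b i 0.

Definition e0 (R : ringType) (n : nat) : 'cV[R]_n.+1 := delta_mx 0 0.

Definition cfgV0 (V W : finType) (E : {set V * W}) (d : V -> W -> nat) (v : V)
  : cfgV E d v := [ffun w => ord0].
Definition cfgW0 (V W : finType) (E : {set V * W}) (d : V -> W -> nat) (w : W)
  : cfgW E d w := [ffun v => ord0].

(* hat f_v = (x)_{w in dv} Phi_{v,w}^{-1} (f_v), in coordinates *)
Definition hatV (R : realFieldType) (V W : finType) (E : {set V * W})
  (d : V -> W -> nat) (Phi : forall v w, 'M[R]_((d v w).+1)) (v : V)
  (f : cfgV E d v -> R) (y : cfgV E d v) : R :=
  \sum_(x : cfgV E d v)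
     (\prod_(w : nbV E v) invmx (Phi v (val w)) (y w) (x w)) * f x.

(* hat g_w = (x)_{v in dw} Phi_{v,w}^* (g_w), in coordinates (adjoint = transpose) *)
Definition hatW (R : realFieldType) (V W : finType) (E : {set V * W})
  (d : V -> W -> nat) (Phi : forall v w, 'M[R]_((d v w).+1)) (w : W)
  (g : cfgW E d w -> R) (y : cfgW E d w) : R :=
  \sum_(x : cfgW E d w)
     (\prod_(v : nbW E w) (Phi (val v) w)^T (y v) (x v)) * g x.

(* partial inner product < f_v , (x)_{w' in dv \ w} m_{w' -> v} >_{V_{dv \ w}},
   an element of V_{v,w}; mWV v w is the message m_{w -> v} *)
Definition contrV (R : realFieldType) (V W : finType) (E : {set V * W})
  (d : V -> W -> nat) (v : V) (f : cfgV E d v -> R)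
  (mWV : forall v w, 'cV[R]_((d v w).+1)) (wv : nbV E v) : 'cV[R]_((d v (val wv)).+1) :=
  \col_(x < (d v (val wv)).+1)
     \sum_(y : cfgV E d v | y wv == x)
        f y * \prod_(w' : nbV E v | w' != wv) mWV v (val w') (y w') 0.

Definition contrW (R : realFieldType) (V W : finType) (E : {set V * W})
  (d : V -> W -> nat) (w : W) (g : cfgW E d w -> R)
  (mVW : forall v w, 'cV[R]_((d v w).+1)) (vw : nbW E w) : 'cV[R]_((d (val vw) w).+1) :=
  \col_(x < (d (val vw) w).+1)
     \sum_(y : cfgW E d w | y vw == x)
        (\prod_(v' : nbW E w | v' != vw) mVW (val v') w (y v') 0) * g y.

Definition fullV (R : realFieldType) (V W : finType) (E : {set V * W})
  (d : V -> W -> nat) (v : V) (f : cfgV E d v -> R)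
  (mWV : forall v w, 'cV[R]_((d v w).+1)) : R :=
  \sum_(y : cfgV E d v) f y * \prod_(w : nbV E v) mWV v (val w) (y w) 0.

Definition fullW (R : realFieldType) (V W : finType) (E : {set V * W})
  (d : V -> W -> nat) (w : W) (g : cfgW E d w -> R)
  (mVW : forall v w, 'cV[R]_((d v w).+1)) : R :=
  \sum_(y : cfgW E d w) (\prod_(v : nbW E w) mVW (val v) w (y v) 0) * g y.

(* Cones in V_{v,w} = R^n (topology of the max-norm, i.e. the usual one) *)
Definition is_closed_set (R : realFieldType) (n : nat) (C : 'cV[R]_n -> Prop) :=
  forall x : 'cV[R]_n,
    (forall eps : R, 0 < eps -> exists2 y : 'cV[R]_n, C y & forall i, `|x i 0 - y i 0| < eps) ->
    C x.

Definition is_closed_convex_cone (R : realFieldType) (n : nat) (C : 'cV[R]_n -> Prop) :=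
  [/\ exists x, C x,
      forall x y, C x -> C y -> C (x + y),
      forall (a : R) x, 0 <= a -> C x -> C (a *: x)
    & is_closed_set C].

Definition dual_cone (R : realFieldType) (n : nat) (C : 'cV[R]_n -> Prop) :
  'cV[R]_n -> Prop := fun f => forall g, C g -> 0 <= dot f g.

Definition in_interior (R : realFieldType) (n : nat) (C : 'cV[R]_n -> Prop)
  (x : 'cV[R]_n) :=
  exists2 eps : R, 0 < eps & forall y : 'cV[R]_n, (forall i, `|y i 0 - x i 0| < eps) -> C y.

Definition BP_fixed_point (R : realFieldType) (V W : finType) (E : {set V * W})
  (d : V -> W -> nat)
  (C : forall v w, 'cV[R]_((d v w).+1) -> Prop)
  (u uS : forall v w, 'cV[R]_((d v w).+1))
  (f : forall v, cfgV E d v -> R) (g : forall w, cfgW E d w -> R)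
  (mVW mWV : forall v w, 'cV[R]_((d v w).+1)) : Prop :=
  (forall v w, (v, w) \in E ->
     [/\ C v w (mVW v w), dual_cone (C v w) (mWV v w),
         dot (mVW v w) (uS v w) = 1 & dot (u v w) (mWV v w) = 1]) /\
  (forall v (wv : nbV E v),
     exists2 k : R, 0 < k & mVW v (val wv) = k *: contrV (f v) mWV wv) /\
  (forall w (vw : nbW E w),
     exists2 k : R, 0 < k & mWV (val vw) w = k *: contrW (g w) mVW vw).

(* Main.v *)
Require Import Defs.
From HB Require Import structures.
From mathcomp Require Import all_boot all_order all_algebra.
Import Order.TTheory GRing.Theory Num.Theory.
Local Open Scope ring_scope.
From mathcomp Require Import ring.

Lemma key (R : realFieldType) (I : finType) (n : I -> nat)
  (A B : forall i, 'M[R]_((n i).+1))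
  (F : {dffun forall i, 'I_(n i).+1} -> R) (i0 : I) :
  B i0 *m A i0 = 1 ->
  (forall y : {dffun forall i, 'I_(n i).+1},
     (forall i, i != i0 -> y i = ord0) -> y i0 != ord0 ->
     \sum_(x : {dffun forall i, 'I_(n i).+1}) (\prod_i A i (y i) (x i)) * F x = 0) ->
  \col_(x < (n i0).+1) \sum_(y : {dffun forall i, 'I_(n i).+1} | y i0 == x)
      F y * \prod_(i | i != i0) A i 0 (y i) =
  (\sum_(x : {dffun forall i, 'I_(n i).+1}) (\prod_i A i ord0 (x i)) * F x) *: (B i0 *m e0 _ _).
Proof.
move=> BA Hz.
set a := \col_(x < _) _.
set h0 := \sum_x _.
have Aa : A i0 *m a = h0 *: e0 _ _.
  apply/matrixP => z j; rewrite (ord1 j) !mxE.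
  under eq_bigr => x _ do rewrite mxE big_distrr /=.
  rewrite (eq_bigr (fun x => \sum_(y : {dffun forall i, 'I_(n i).+1} | true && (y i0 == x)) A i0 z (y i0) * (F y * \prod_(i | i != i0) A i 0 (y i)))); last first.
    by move=> x _; apply: eq_big => [y|y /eqP ->] //.
  rewrite -(partition_big (fun y : {dffun forall i, 'I_(n i).+1} => y i0) xpredT (F := fun y => A i0 z (y i0) * (F y * \prod_(i | i != i0) A i 0 (y i)))) //=.
  idtac.
  pose z' : {dffun forall i, 'I_(n i).+1} :=
    finfun (fun i => if i == i0 then inord z else ord0).
  have -> : \sum_(y : {dffun forall i, 'I_(n i).+1}) A i0 z (y i0) * (F y * \prod_(i | i != i0) A i 0 (y i))
      = \sum_(x : {dffun forall i, 'I_(n i).+1}) (\prod_i A i (z' i) (x i)) * F x.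
    apply: eq_bigr => y _.
    rewrite (bigD1 i0 (P := xpredT)) //= -mulrA [F y * _]mulrC; congr (_ * (_ * _)).
    by rewrite /z' ffunE eqxx inord_val.
    apply: eq_bigr => i Hi; by rewrite /z' ffunE (negbTE Hi).
  have [z0|zn0] := eqVneq z ord0.
    rewrite /= mulr1 /h0; apply: eq_bigr => x _; congr (_ * _).
    apply: eq_bigr => i _; rewrite /z' ffunE.
    by case: eqP => // ->; rewrite z0; congr (A _ _ _); apply/val_inj; rewrite /= inordK.
  rewrite /= mulr0; apply: Hz.
    by move=> i Hi; rewrite /z' ffunE (negbTE Hi).
  by rewrite /z' ffunE eqxx inord_val.
have BA1 : B i0 *m A i0 = 1%:M := BA.
by rewrite -[a]mul1mx -BA1 -mulmxA Aa scalemxAr.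
Qed.

Lemma prodVE (R : comRingType) (V W : finType) (E : {set V * W}) (G : V -> W -> R) :
  \prod_(v : V) \prod_(w : nbV E v) G v (val w) = \prod_(e in E) G e.1 e.2.
Proof.
transitivity (\prod_(v : V) \prod_(w | (v, w) \in E) G v w).
  apply: eq_bigr => v _.
  exact: (esym (big_sub [pred w | (v, w) \in E] (G v))).
by rewrite pair_big_dep; apply: eq_bigl => -[a b].
Qed.

Lemma prodWE (R : comRingType) (V W : finType) (E : {set V * W}) (G : V -> W -> R) :
  \prod_(w : W) \prod_(v : nbW E w) G (val v) w = \prod_(e in E) G e.1 e.2.
Proof.
transitivity (\prod_(w : W) \prod_(v | (v, w) \in E) G v w).
  apply: eq_bigr => w _.
  exact: (esym (big_sub [pred v | (v, w) \in E] (G^~ w))).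
rewrite (exchange_big_dep xpredT) //= pair_big_dep; by apply: eq_bigl => -[a b].
Qed.

Lemma mul_e0 (R : ringType) m n (M : 'M[R]_(m, n.+1)) i : (M *m e0 R n) i 0 = M i 0.
Proof.
rewrite mxE (bigD1 ord0) //= /e0 mxE eqxx mulr1 big1 ?addr0 // => j Hj.
by rewrite mxE (negbTE Hj) mulr0.
Qed.
Theorem mainTheorem4
  (R : realFieldType) (V W : finType) (E : {set V * W}) (d : V -> W -> nat)
  (f : forall v : V, cfgV E d v -> R) (g : forall w : W, cfgW E d w -> R)
  (Phi : forall v w, 'M[R]_((d v w).+1))
  (C : forall v w, 'cV[R]_((d v w).+1) -> Prop)
  (u uS : forall v w, 'cV[R]_((d v w).+1))
  (c ch : V -> W -> R)
  (mVW mWV : forall v w, 'cV[R]_((d v w).+1))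
  (* Phi_{v,w} invertible *)
  (HPhi : forall v w, (v, w) \in E -> Phi v w \in unitmx)
  (* hypotheses of the previous statement *)
  (Hf : forall v (wv : nbV E v) (y : cfgV E d v),
      (forall w' : nbV E v, w' != wv -> y w' = ord0) -> y wv != ord0 ->
      hatV Phi (f v) y = 0)
  (Hg : forall w (vw : nbW E w) (y : cfgW E d w),
      (forall v' : nbW E w, v' != vw -> y v' = ord0) -> y vw != ord0 ->
      hatW Phi (g w) y = 0)
  (* cone setting *)
  (HC : forall v w, (v, w) \in E -> is_closed_convex_cone (C v w))
  (Hu : forall v w, (v, w) \in E -> in_interior (C v w) (u v w))
  (HuS : forall v w, (v, w) \in E -> in_interior (dual_cone (C v w)) (uS v w))
  (* additional assumptions *)
  (HPhiC : forall v w, (v, w) \in E -> C v w (Phi v w *m e0 _ _))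
  (HPhihC : forall v w, (v, w) \in E ->
      dual_cone (C v w) ((invmx (Phi v w))^T *m e0 _ _))
  (Hpos : forall v w, (v, w) \in E -> 0 < dot (Phi v w *m e0 _ _) (uS v w))
  (Hposh : forall v w, (v, w) \in E ->
      0 < dot (u v w) ((invmx (Phi v w))^T *m e0 _ _))
  (* the decompositions Phi(e_0) = c m_{v->w}, hat Phi^*(e_0) = hat c m_{w->v} *)
  (Hc : forall v w, (v, w) \in E ->
      [/\ 0 < c v w, 0 < ch v w,
          Phi v w *m e0 _ _ = c v w *: mVW v w
        & (invmx (Phi v w))^T *m e0 _ _ = ch v w *: mWV v w])
  (Hm : forall v w, (v, w) \in E ->
      [/\ C v w (mVW v w), dual_cone (C v w) (mWV v w),
          dot (mVW v w) (uS v w) = 1 & dot (u v w) (mWV v w) = 1]) :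
  let alpha := fun v : V => hatV Phi (f v) (cfgV0 E d v) in
  let alphah := fun w : W => hatW Phi (g w) (cfgW0 E d w) in
  (* (i) *)
  (forall v w, (v, w) \in E -> c v w * ch v w * dot (mVW v w) (mWV v w) = 1) /\
  (* (ii) *)
  (forall v (wv : nbV E v),
      contrV (f v) mWV wv =
      (alpha v * c v (val wv) / \prod_(w' : nbV E v | w' != wv) ch v (val w'))
        *: mVW v (val wv)) /\
  (forall w (vw : nbW E w),
      contrW (g w) mVW vw =
      (alphah w * ch (val vw) w / \prod_(v' : nbW E w | v' != vw) c (val v') w)
        *: mWV (val vw) w) /\
  ((forall v, 0 < alpha v) -> (forall w, 0 < alphah w) ->
      BP_fixed_point C u uS f g mVW mWV) /\
  (* (iii) *)
  (\prod_(v : V) alpha v * \prod_(w : W) alphah w =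
   \prod_(v : V) fullV (f v) mWV * \prod_(w : W) fullW (g w) mVW *
   \prod_(e in E) (dot (mVW e.1 e.2) (mWV e.1 e.2))^-1).
Proof.
move=> alpha alphah.
have ch0 : forall v w, (v, w) \in E -> ch v w != 0.
  by move=> v w e; case: (Hc v w e) => _ h _ _; rewrite gt_eqF.
have c0 : forall v w, (v, w) \in E -> c v w != 0.
  by move=> v w e; case: (Hc v w e) => h _ _ _; rewrite gt_eqF.
have emWV : forall v w, (v, w) \in E -> forall i,
    mWV v w i 0 = invmx (Phi v w) 0 i / ch v w.
  move=> v w e i; case: (Hc v w e) => _ _ _ H.
  have := congr1 (fun M : 'cV[R]_((d v w).+1) => M i 0) H; rewrite mul_e0 !mxE => ->.
  by rewrite mulrAC mulfV ?mul1r // ch0.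
have emVW : forall v w, (v, w) \in E -> forall i,
    mVW v w i 0 = Phi v w i 0 / c v w.
  move=> v w e i; case: (Hc v w e) => _ _ H _.
  have := congr1 (fun M : 'cV[R]_((d v w).+1) => M i 0) H; rewrite mul_e0 !mxE => ->.
  by rewrite mulrAC mulfV ?mul1r // c0.
have partI : forall v w, (v, w) \in E -> c v w * ch v w * dot (mVW v w) (mWV v w) = 1.
  move=> v w e.
  transitivity ((invmx (Phi v w) *m Phi v w) 0 0); last first.
    by rewrite mulVmx ?HPhi // mxE eqxx.
  rewrite mxE /dot mulr_sumr; apply: eq_bigr => i _.
  rewrite emVW // emWV //.
  field.
  by rewrite c0 ?ch0.
have iiV : forall v (wv : nbV E v),
      contrV (f v) mWV wv =
      (alpha v * c v (val wv) / \prod_(w' : nbV E v | w' != wv) ch v (val w'))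
        *: mVW v (val wv).
  move=> v wv; have e : (v, val wv) \in E := valP wv.
  have K := @key R (nbV E v) (fun w => d v (val w)) (fun i => invmx (Phi v (val i)))
     (fun i => Phi v (val i)) (f v) wv (mulmxV (HPhi _ _ e)) (fun y H1 H2 => Hf v wv y H1 H2).
  case: (Hc _ _ e) => _ _ He _.
  rewrite /= He in K.
  apply/matrixP => x j; rewrite (ord1 j).
  have Kx := congr1 (fun M : 'cV[R]_((d v (val wv)).+1) => M x 0) K.
  rewrite /= !mxE in Kx.
  rewrite /contrV !mxE.
  have -> : alpha v = \sum_(y : cfgV E d v) (\prod_w invmx (Phi v (val w)) ord0 (y w)) * f v y.
    by rewrite /alpha /hatV; apply: eq_bigr => y _; congr (_ * _); apply: eq_bigr => w _; rewrite ffunE.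
  set P := \prod_(w' | w' != wv) ch v (val w').
  rewrite (eq_bigr (fun y => P^-1 * (f v y * \prod_(i | i != wv) invmx (Phi v (val i)) 0 (y i)))); last first.
    move=> y _.
    rewrite (eq_bigr (fun i => invmx (Phi v (val i)) 0 (y i) * (ch v (val i))^-1)); last first.
      by move=> i _; exact: emWV (valP i) _.
    rewrite big_split prodfV /= -/P; ring.
  rewrite -mulr_sumr Kx.
  ring.
have iiW : forall w (vw : nbW E w),
      contrW (g w) mVW vw =
      (alphah w * ch (val vw) w / \prod_(v' : nbW E w | v' != vw) c (val v') w)
        *: mWV (val vw) w.
  move=> w vw; have e : (val vw, w) \in E := valP vw.
  have BA : (invmx (Phi (val vw) w))^T *m (Phi (val vw) w)^T = 1.
    by rewrite -trmx_mul mulmxV ?HPhi // trmx1.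
  have K := @key R (nbW E w) (fun v => d (val v) w) (fun i => (Phi (val i) w)^T)
     (fun i => (invmx (Phi (val i) w))^T) (g w) vw BA (fun y H1 H2 => Hg w vw y H1 H2).
  case: (Hc _ _ e) => _ _ _ He.
  rewrite /= He in K.
  apply/matrixP => x j; rewrite (ord1 j).
  have Kx := congr1 (fun M : 'cV[R]_((d (val vw) w).+1) => M x 0) K.
  rewrite /= !mxE in Kx.
  rewrite /contrW !mxE.
  have -> : alphah w = \sum_(y : cfgW E d w) (\prod_v (Phi (val v) w)^T ord0 (y v)) * g w y.
    by rewrite /alphah /hatW; apply: eq_bigr => y _; congr (_ * _); apply: eq_bigr => v _; rewrite ffunE.
  set Q := \prod_(v' | v' != vw) c (val v') w.
  rewrite (eq_bigr (fun y => Q^-1 * (g w y * \prod_(i | i != vw) (Phi (val i) w)^T 0 (y i)))); last first.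
    move=> y _.
    rewrite (eq_bigr (fun i => (Phi (val i) w)^T 0 (y i) * (c (val i) w)^-1)); last first.
      by move=> i _; rewrite mxE; exact: emVW (valP i) _.
    rewrite big_split prodfV /= -/Q; ring.
  rewrite -mulr_sumr Kx.
  ring.
have fV : forall v, fullV (f v) mWV = alpha v / \prod_(w : nbV E v) ch v (val w).
  move=> v; rewrite /fullV /alpha /hatV mulr_suml; apply: eq_bigr => y _.
  rewrite (eq_bigr (fun i => invmx (Phi v (val i)) 0 (y i) * (ch v (val i))^-1)); last first.
    by move=> i _; exact: emWV (valP i) _.
  have -> : \prod_w invmx (Phi v (val w)) (cfgV0 E d v w) (y w) =
            \prod_w invmx (Phi v (val w)) 0 (y w).
    by apply: eq_bigr => w _; rewrite ffunE.
  rewrite big_split prodfV /=; ring.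
have fW : forall w, fullW (g w) mVW = alphah w / \prod_(v : nbW E w) c (val v) w.
  move=> w; rewrite /fullW /alphah /hatW mulr_suml; apply: eq_bigr => y _.
  rewrite (eq_bigr (fun i => Phi (val i) w (y i) 0 * (c (val i) w)^-1)); last first.
    by move=> i _; exact: emVW (valP i) _.
  have -> : \prod_v (Phi (val v) w)^T (cfgW0 E d w v) (y v) =
            \prod_v Phi (val v) w (y v) 0.
    by apply: eq_bigr => v _; rewrite ffunE mxE.
  rewrite big_split prodfV /=; ring.
split; first exact: partI.
split; first exact: iiV.
split; first exact: iiW.
split.
  move=> Ha Hah; split; first by move=> v w e; exact: Hm.
  split.
    move=> v wv; have e : (v, val wv) \in E := valP wv.
    case: (Hc _ _ e) => cp _ _ _.
    have kp : 0 < alpha v * c v (val wv) / \prod_(w' : nbV E v | w' != wv) ch v (val w').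
      rewrite divr_gt0 ?mulr_gt0 // prodr_gt0 // => i _.
      by case: (Hc _ _ (valP i)).
    exists (alpha v * c v (val wv) / \prod_(w' : nbV E v | w' != wv) ch v (val w'))^-1.
      by rewrite invr_gt0.
    by rewrite iiV scalerA mulVf ?scale1r // gt_eqF.
  move=> w vw; have e : (val vw, w) \in E := valP vw.
  case: (Hc _ _ e) => _ cp _ _.
  have kp : 0 < alphah w * ch (val vw) w / \prod_(v' : nbW E w | v' != vw) c (val v') w.
    rewrite divr_gt0 ?mulr_gt0 // prodr_gt0 // => i _.
    by case: (Hc _ _ (valP i)).
  exists (alphah w * ch (val vw) w / \prod_(v' : nbW E w | v' != vw) c (val v') w)^-1.
    by rewrite invr_gt0.
  by rewrite iiW scalerA mulVf ?scale1r // gt_eqF.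
have -> : \prod_(e in E) (dot (mVW e.1 e.2) (mWV e.1 e.2))^-1 =
          \prod_(e in E) (c e.1 e.2 * ch e.1 e.2).
  apply: eq_bigr => -[a b] e /=.
  have H := partI a b e.
  have dn0 : dot (mVW a b) (mWV a b) != 0.
    by apply/eqP => h; move: H; rewrite h mulr0 => /eqP; rewrite eq_sym oner_eq0.
  by rewrite -[LHS]mul1r -H mulfK.
under [X in _ = X * _ * _]eq_bigr do rewrite fV.
under [X in _ = _ * X * _]eq_bigr do rewrite fW.
rewrite !big_split /= !prodfV prodVE prodWE.
have Pc : \prod_(e in E) c e.1 e.2 != 0.
  by rewrite gt_eqF // prodr_gt0 // => -[a b] e; case: (Hc a b e).
have Pch : \prod_(e in E) ch e.1 e.2 != 0.
  by rewrite gt_eqF // prodr_gt0 // => -[a b] e; case: (Hc a b e).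
field.
by rewrite Pc Pch.
Qed.
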